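(* Let $\mathcal{C}=\mathrm{CSS}(C_X,C_Z)$ be an $[[n,k,d]]_2$ CSS code exhibiting $(c_1,c_2,\epsilon_0)$-clustering, let $\epsilon<\frac{1}{1000}\min\{\frac{\epsilon_0}{2},\frac{c_2}{4c_1},\frac{d}{2c_1n}\}$ and $\epsilon'=1000\epsilon$. For $y\in G_Z^{\epsilon'}$ define $\mathrm{Cl}(y)=\{y'\in G_Z^{\epsilon'}:|y+y'|_{C_X^\perp}\le 2c_1\epsilon' n\}$. Then the sets $\mathrm{Cl}(y)$, $y\in G_Z^{\epsilon'}$, form a partition of $G_Z^{\epsilon'}$ (any two are equal or disjoint, and $y\in\mathrm{Cl}(y)$), and moreover: (1) any two distinct clusters $\mathrm{Cl}(y)\ne\mathrm{Cl}(y')$ satisfy $\mathrm{dis}(\mathrm{Cl}(y),\mathrm{Cl}(y'))\ge c_2n$; (2) for every $y\in G_Z^{\epsilon'}$ and $c\in C_Z$, $\mathrm{Cl}(y+c)=\mathrm{Cl}(y)+c$, and $\mathrm{Cl}(y+c)=\mathrm{Cl}(y)$ if and only if $c\in C_X^\perp$.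
   Context: Over $\mathbb{F}_2$: $C_X=\ker H_X$, $C_Z=\ker H_Z$, $H_X\in\mathbb{F}_2^{m_X\times n}$, $H_Z\in\mathbb{F}_2^{m_Z\times n}$, $C_X^\perp\subseteq C_Z$, distance $d=\min\{|y|:y\in(C_Z\setminus C_X^\perp)\cup(C_X\setminus C_Z^\perp)\}$. $|y|_C=\min_{y'\in C}|y+y'|$, $\mathrm{dis}(S,T)=\min_{s\in S,t\in T}|s-t|$, $G_X^\epsilon=\{y:|H_Xy|\le\epsilon m_X\}$, $G_Z^\epsilon=\{y:|H_Zy|\le\epsilon m_Z\}$. $(c_1,c_2,\epsilon_0)$-clustering: for all $0<\epsilon<\epsilon_0$, every $y\in G_X^\epsilon$ has $|y|_{C_Z^\perp}\le c_1\epsilon n$ or $\ge c_2 n$, and every $y\in G_Z^\epsilon$ has $|y|_{C_X^\perp}\le c_1\epsilon n$ or $\ge c_2n$. *)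

(* Defs.v *)
From HB Require Import structures.
From mathcomp Require Import all_boot all_order all_algebra.
Set Implicit Arguments. Unset Strict Implicit. Unset Printing Implicit Defensive.
Import Order.TTheory GRing.Theory Num.Theory.
Local Open Scope ring_scope.

Notation vec n := 'cV['F_2]_n.

Definition wt (m : nat) (v : vec m) : nat := #|[set i : 'I_m | v i 0 != 0]|.

Definition dotv (n : nat) (x y : vec n) : 'F_2 := (x^T *m y) 0 0.

Definition kerC (m n : nat) (H : 'M['F_2]_(m, n)) : {set vec n} :=
  [set y | H *m y == 0].

Definition dualC (n : nat) (C : {set vec n}) : {set vec n} :=
  [set y | [forall x in C, dotv x y == 0]].

(* |y|_C = min_{y' in C} |y + y'|   (C is nonempty in all uses) *)
Definition cwt (n : nat) (C : {set vec n}) (y : vec n) : nat :=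
  \big[minn/n]_(y' in C) wt (y + y').

(* dis(S,T) = min_{s in S, t in T} |s - t|   (S, T nonempty in all uses) *)
Definition dis (n : nat) (S T : {set vec n}) : nat :=
  \big[minn/n]_(s in S) \big[minn/n]_(t in T) wt (s - t).

Definition Gset (R : realFieldType) (m n : nat) (H : 'M['F_2]_(m, n)) (eps : R)
  : {set vec n} :=
  [set y | (wt (H *m y))%:R <= eps * m%:R].

Definition css (mX mZ n : nat) (HX : 'M['F_2]_(mX, n)) (HZ : 'M['F_2]_(mZ, n)) :=
  dualC (kerC HX) \subset kerC HZ.

Definition is_distance (mX mZ n : nat) (HX : 'M['F_2]_(mX, n)) (HZ : 'M['F_2]_(mZ, n))
  (d : nat) : Prop :=
  let L := (kerC HZ :\: dualC (kerC HX)) :|: (kerC HX :\: dualC (kerC HZ)) in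
  (exists2 y, y \in L & wt y = d) /\ (forall y, y \in L -> (d <= wt y)%N).

Definition clustering (R : realFieldType) (mX mZ n : nat)
  (HX : 'M['F_2]_(mX, n)) (HZ : 'M['F_2]_(mZ, n)) (c1 c2 eps0 : R) : Prop :=
  forall eps : R, 0 < eps -> eps < eps0 ->
    (forall y, y \in Gset HX eps ->
       ((cwt (dualC (kerC HZ)) y)%:R <= c1 * eps * n%:R) \/
       (c2 * n%:R <= (cwt (dualC (kerC HZ)) y)%:R)) /\
    (forall y, y \in Gset HZ eps ->
       ((cwt (dualC (kerC HX)) y)%:R <= c1 * eps * n%:R) \/
       (c2 * n%:R <= (cwt (dualC (kerC HX)) y)%:R)).

Definition Cl (R : realFieldType) (mX mZ n : nat)
  (HX : 'M['F_2]_(mX, n)) (HZ : 'M['F_2]_(mZ, n)) (c1 eps' : R) (y : vec n)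
  : {set vec n} :=
  [set y' in Gset HZ eps' |
     (cwt (dualC (kerC HX)) (y + y'))%:R <= 2 * c1 * eps' * n%:R].

(* Main.v *)
Require Import Defs.

From mathcomp Require Import all_boot all_order all_algebra.
From mathcomp Require Import zify ring lra.
Import Order.TTheory GRing.Theory Num.Theory.
Set Implicit Arguments. Unset Strict Implicit.

Section BigMin.
Variables (I : finType) (P : pred I) (F : I -> nat) (x0 : nat).

Lemma bigmin_le_seq (r : seq I) i : i \in r -> P i ->
  (\big[minn/x0]_(j <- r | P j) F j <= F i)%N.
Proof.
elim: r => // a r IH; rewrite in_cons big_cons => /orP[/eqP<-|ir] Pi.
  by rewrite Pi geq_minl.
by case: (P a); [rewrite geq_min IH ?orbT | exact: IH].
Qed.

Lemma bigmin_le i : P i -> (\big[minn/x0]_(j | P j) F j <= F i)%N.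
Proof. by move=> Pi; apply: bigmin_le_seq; rewrite ?mem_index_enum. Qed.

Lemma le_bigmin k : (k <= x0)%N -> (forall i, P i -> k <= F i)%N ->
  (k <= \big[minn/x0]_(j | P j) F j)%N.
Proof.
move=> hx hF; apply: (big_ind (fun x => k <= x)%N) => //.
by move=> a b ha hb; rewrite leq_min ha hb.
Qed.

Lemma bigmin_attain_seq (r : seq I) : has P r ->
  exists2 j, P j & \big[minn/x0]_(j <- r | P j) F j = minn x0 (F j).
Proof.
elim: r => // a r IH /=; rewrite big_cons.
case Pa: (P a) => /=; last first.
  by move=> /IH.
case hr: (has P r).
  have [j Pj ->] := IH hr.
  case: (leqP (F a) (F j)) => h.
    by exists a => //; lia.
  by exists j => //; lia.
move=> _; exists a => //.
have -> : \big[minn/x0]_(j <- r | P j) F j = x0.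
  elim: r hr {IH} => [|b r IH']; first by rewrite big_nil.
  by rewrite /= big_cons; case: (P b) => //= /IH'.
by rewrite minnC.
Qed.

Lemma bigmin_attain : (exists i, P i) ->
  exists2 j, P j & \big[minn/x0]_(j | P j) F j = minn x0 (F j).
Proof.
move=> [i Pi]; apply: bigmin_attain_seq; apply/hasP; exists i => //.

Qed.
End BigMin.

Local Open Scope ring_scope.
Lemma addvv n (v : vec n) : v + v = 0.
Proof.
apply/matrixP=> i j; rewrite !mxE; apply: addrr_pchar2.
exact: (@pchar_Fp 2).
Qed.

Lemma oppv n (v : vec n) : - v = v.
Proof. by apply/esym/eqP; rewrite -addr_eq0 addvv. Qed.

Lemma wt_le n (v : vec n) : (wt v <= n)%N.
Proof. by rewrite /wt; apply: leq_trans (max_card _) _; rewrite card_ord. Qed.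

Lemma wt0 n : wt (0 : vec n) = 0%N.
Proof.
rewrite /wt; apply/eqP; rewrite cards_eq0; apply/eqP/setP => i.
by rewrite !inE mxE eqxx.
Qed.

Lemma wtD n (a b : vec n) : (wt (a + b) <= wt a + wt b)%N.
Proof.
rewrite /wt; apply: leq_trans (leq_card_setU _ _).
apply: subset_leq_card; apply/subsetP => i; rewrite !inE mxE.
apply: contraR; rewrite negb_or !negbK => /andP[/eqP-> /eqP->].
by rewrite addr0.
Qed.

Lemma dual0 n (C : {set vec n}) : 0 \in dualC C.
Proof.
by rewrite inE; apply/forall_inP => x _; rewrite /dotv mulmx0 mxE.
Qed.

Lemma dualD n (C : {set vec n}) x y : x \in dualC C -> y \in dualC C ->
  x + y \in dualC C.
Proof.
rewrite !inE => /forall_inP hx /forall_inP hy; apply/forall_inP => z zC.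
move: (hx z zC) (hy z zC); rewrite /dotv mulmxDr !mxE => /eqP-> /eqP->; by rewrite addr0. Qed.

Section Cwt.
Variables (n : nat) (C : {set vec n}).
Let D := dualC C.

Lemma cwt_le y u : u \in D -> (cwt D y <= wt (y + u))%N.
Proof. by move=> uD; rewrite /cwt; apply: bigmin_le. Qed.

Lemma cwt_ub y : (cwt D y <= wt y)%N.
Proof. by have := cwt_le y (dual0 C); rewrite addr0. Qed.

Lemma cwt_attain y : exists2 u, u \in D & cwt D y = wt (y + u).
Proof.
rewrite /cwt; have [u uD ->] := @bigmin_attain _ (mem D) (fun u => wt (y + u)) n
  (ex_intro _ 0 (dual0 C)).
by exists u => //; apply/minn_idPr; apply: wt_le.
Qed.

Lemma cwt_ge k y : (k <= n)%N -> (forall u, u \in D -> k <= wt (y + u))%N ->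
  (k <= cwt D y)%N.
Proof. by move=> hk hu; apply: le_bigmin. Qed.

Lemma cwt_tri a b : (cwt D (a + b) <= cwt D a + cwt D b)%N.
Proof.
have [u uD ->] := cwt_attain a; have [v vD ->] := cwt_attain b.
apply: leq_trans (cwt_le (a + b) (dualD uD vD)) _.
have -> : a + b + (u + v) = (a + u) + (b + v).
  by rewrite addrACA.
exact: wtD.
Qed.

Lemma cwt0 : cwt D 0 = 0%N.
Proof. by apply/eqP; rewrite -leqn0; apply: leq_trans (cwt_ub 0) _; rewrite wt0. Qed.

Lemma cwt_shift a u : u \in D -> cwt D (a + u) = cwt D a.
Proof.
move=> uD; apply/eqP; rewrite eqn_leq; apply/andP; split.
  apply: leq_trans (cwt_tri _ _) _.
  by rewrite (_ : cwt D u = 0%N) ?addn0 //; apply/eqP; rewrite -leqn0;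
     apply: leq_trans (cwt_le u uD) _; rewrite addvv wt0.
have {1}-> : a = (a + u) + u by rewrite -addrA addvv addr0.
apply: leq_trans (cwt_tri _ _) _.
by rewrite (_ : cwt D u = 0%N) ?addn0 //; apply/eqP; rewrite -leqn0;
   apply: leq_trans (cwt_le u uD) _; rewrite addvv wt0.
Qed.
End Cwt.

Theorem lemma4p10 (R : realFieldType) (mX mZ n d : nat)
  (HX : 'M['F_2]_(mX, n)) (HZ : 'M['F_2]_(mZ, n)) (c1 c2 eps0 eps : R) :
  css HX HZ ->
  is_distance HX HZ d ->
  0 < c1 -> 0 < c2 -> 0 < eps0 ->
  clustering HX HZ c1 c2 eps0 ->
  0 < eps ->
  eps < 1000^-1 * Num.min (eps0 / 2)
                   (Num.min (c2 / (4 * c1)) (d%:R / (2 * c1 * n%:R))) ->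
  let eps' := 1000 * eps in
  let G := Gset HZ eps' in
  let Cl := Cl HX HZ c1 eps' in
  (* partition *)
  (forall y, y \in G -> y \in Cl y) /\
  (forall y y', y \in G -> y' \in G -> Cl y = Cl y' \/ [disjoint Cl y & Cl y']) /\
  (* (1) *)
  (forall y y', y \in G -> y' \in G -> Cl y != Cl y' ->
     c2 * n%:R <= (dis (Cl y) (Cl y'))%:R) /\
  (* (2) *)
  (forall y c, y \in G -> c \in kerC HZ ->
     Cl (y + c) = [set z + c | z in Cl y] /\
     (Cl (y + c) = Cl y <-> c \in dualC (kerC HX))).
Proof.
move=> hcss [[w0 w0L w0d] hdist] c1p c2p e0p hcl ep heps eps' G Cl.
set D := dualC (kerC HX).
have hdn : (d <= n)%N by rewrite -w0d wt_le.
clear w0d w0L w0.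
have hM : 1000 * eps < Num.min (eps0 / 2)
                   (Num.min (c2 / (4 * c1)) (d%:R / (2 * c1 * n%:R))).
  by rewrite -ltr_pdivlMl.
rewrite !lt_min in hM; case/and3P: hM => hm1 hm2 hm3.
have n0 : (0 < n)%N.
  rewrite lt0n; apply/negP => /eqP n0; rewrite n0 mulr0 invr0 mulr0 in hm3; clear n0; lra.
have nR : 0 < n%:R :> R by rewrite ltr0n.
rewrite ltr_pdivlMr // in hm1.
rewrite ltr_pdivlMr ?mulr_gt0 // in hm2.
rewrite ltr_pdivlMr ?mulr_gt0 // in hm3.
have e'p : 0 < eps' by rewrite /eps'; lra.
have h1 : 2 * eps' < eps0 by rewrite /eps'; lra.
have h2 : 4 * c1 * eps' * n%:R < c2 * n%:R.
  rewrite ltr_pM2r //; rewrite /eps'; lra.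
have h3 : 2 * c1 * eps' * n%:R < d%:R by rewrite /eps'; lra.
have hpos : 0 <= 2 * c1 * eps' * n%:R by rewrite !mulr_ge0 // ltW.
have inCl : forall y y', (y' \in Cl y) =
    (y' \in G) && ((cwt D (y + y'))%:R <= 2 * c1 * eps' * n%:R).
  by move=> y y'; rewrite /Cl /Defs.Cl inE.
have G2 : forall a b, a \in G -> b \in G -> a + b \in Gset HZ (2 * eps').
  move=> a b; rewrite !inE mulmxDr => ha hb.
  apply: le_trans (_ : (wt (HZ *m a) + wt (HZ *m b))%:R <= _).
    by rewrite ler_nat wtD.
  by rewrite natrD; lra.
have cl2 : forall a b, a \in G -> b \in G ->
   (cwt D (a + b))%:R <= 2 * c1 * eps' * n%:R \/ c2 * n%:R <= (cwt D (a + b))%:R.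
  move=> a b aG bG; have [_ hZ] := hcl (2 * eps') (mulr_gt0 (ltr0Sn _ _) e'p) h1.
  case: (hZ _ (G2 a b aG bG)) => h; [left|by right].
  by apply: le_trans h _; rewrite mulrA (mulrC c1).
have key : forall a b, a \in G -> b \in G ->
    (cwt D (a + b))%:R <= 4 * c1 * eps' * n%:R ->
    (cwt D (a + b))%:R <= 2 * c1 * eps' * n%:R.
  move=> a b aG bG h; case: (cl2 a b aG bG) => // h'; lra.
have tri3 : forall a b c : vec n, a + c = (a + b) + (b + c).
  by move=> a b c; rewrite addrA -(addrA a b b) addvv addr0.
have ctri : forall a b c : vec n,
    (cwt D (a + c))%:R <= (cwt D (a + b))%:R + (cwt D (b + c))%:R :> R.
  by move=> a b c; rewrite -natrD ler_nat (tri3 a b c) cwt_tri.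
have sub : forall y y', y \in G -> y' \in G ->
    (cwt D (y + y'))%:R <= 2 * c1 * eps' * n%:R -> Cl y \subset Cl y'.
  move=> y y' yG y'G h; apply/subsetP => w; rewrite !inCl => /andP[wG hw].
  rewrite wG /=; apply: key => //.
  apply: le_trans (ctri _ y _) _; rewrite (addrC y' y); lra.
have same : forall y y' z, y \in G -> y' \in G -> z \in Cl y -> z \in Cl y' ->
    Cl y = Cl y'.
  move=> y y' z yG y'G; rewrite !inCl => /andP[zG hz] /andP[_ hz'].
  have h : (cwt D (y + y'))%:R <= 2 * c1 * eps' * n%:R.
    apply: key => //; apply: le_trans (ctri _ z _) _; rewrite (addrC z); lra.
  apply/eqP; rewrite eqEsubset !sub //; by rewrite addrC.
have self : forall y, y \in G -> y \in Cl y.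
  by move=> y yG; rewrite inCl yG addvv cwt0.
have Gc : forall c z, c \in kerC HZ -> (z + c \in G) = (z \in G).
  by move=> c z; rewrite !inE mulmxDr => /eqP->; rewrite addr0.
split; first exact: self.
split.
  move=> y y' yG y'G; rewrite -setI_eq0.
  case: eqP => [h|/eqP/set0Pn[z]]; first by right.
  by rewrite inE => /andP[z1 z2]; left; apply: (same _ _ z).
split.
  move=> y y' yG y'G hne.
  have pair : forall s t, s \in Cl y -> t \in Cl y' ->
      c2 * n%:R <= (wt (s - t))%:R.
    move=> s t sC tC; rewrite oppv.
    have [sG hs] := andP (etrans (esym (inCl _ _)) sC).
    have [tG ht] := andP (etrans (esym (inCl _ _)) tC).
    case: (cl2 s t sG tG) => h; last first.
      by apply: le_trans h _; rewrite ler_nat cwt_ub.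
    have tCy : t \in Cl y.
      rewrite inCl tG /=; apply: key => //.
      by apply: le_trans (ctri _ s _) _; lra.
    by rewrite (same _ _ t yG y'G tCy tC) eqxx in hne.
  have cn : c2 * n%:R <= n%:R.
    by apply: le_trans (pair y y' (self y yG) (self y' y'G)) _; rewrite ler_nat wt_le.
  rewrite /dis; apply: (big_ind (fun x : nat => c2 * n%:R <= x%:R)) => //.
    by move=> a b ha hb; rewrite /minn; case: ifP.
  move=> s sC; apply: (big_ind (fun x : nat => c2 * n%:R <= x%:R)) => //.
    by move=> a b ha hb; rewrite /minn; case: ifP.
  by move=> t tC; apply: pair.
move=> y c yG cK; split.
  apply/setP => z; apply/idP/imsetP.
    rewrite inCl => /andP[zG hz]; exists (z + c).
      rewrite inCl Gc // zG /=.
      by rewrite addrA (addrAC y z c).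
    by rewrite -addrA addvv addr0.
  move=> [w wC ->]; move: wC; rewrite !inCl Gc // => /andP[-> hw] /=.
  by rewrite addrACA addvv addr0.
split.
  move=> hcl'; apply/negPn/negP => cD.
  have ycG : y + c \in G by rewrite Gc.
  have := self _ ycG; rewrite hcl' inCl => /andP[_].
  rewrite addrA addvv add0r => hc.
  have : d%:R <= (cwt D c)%:R :> R.
    rewrite ler_nat; apply: cwt_ge.
      by [].
    move=> u uD; apply: hdist; rewrite !inE.
    have uK : u \in kerC HZ by apply: (subsetP hcss).
    move: cK uK; rewrite !inE mulmxDr => /eqP-> /eqP->; rewrite addr0 eqxx /=.
    apply/orP; left; rewrite andbT; apply: contra cD => cuD.
    have {}cuD : c + u \in D by rewrite /D inE.
    by have := dualD cuD uD; rewrite -addrA addvv addr0.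
  lra.
move=> cD; apply/setP => z; rewrite !inCl.
by rewrite (addrAC y c z) cwt_shift.
Qed.
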